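(* Let $\mathbb{H}$ be a reproducing kernel Hilbert space with inner product $\langle\cdot,\cdot\rangle$ and feature map $\phi$, and let $(X,A,Y)$ be jointly distributed with $Y=\langle\phi(X),y\rangle$ and $A=\langle\phi(X),a\rangle$ for some nonzero $y,a\in\mathbb{H}$, with $\operatorname{Var}(Y),\operatorname{Var}(A)>0$; let $\rho_{YA}$ be the correlation coefficient of $Y$ and $A$. For $\lambda\ge 0$ define $$\mathbf{OPT}(\lambda):=\inf_{Z}\ \lambda\operatorname{Var}\mathbb{E}[A\mid Z]-\operatorname{Var}\mathbb{E}[Y\mid Z],$$ the infimum over all (possibly randomized) representations $Z=g(X)$. Then $$\mathbf{OPT}(\lambda)\ge\frac12\Big\{\lambda\operatorname{Var}(A)-\operatorname{Var}(Y)-\sqrt{\operatorname{Var}^2(Y)+\lambda^2\operatorname{Var}^2(A)-2\lambda\operatorname{Var}(A)\operatorname{Var}(Y)(2\rho_{YA}^2-1)}\Big\}.$$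
   Context: A (possibly randomized) representation is $Z=g(X,S)$ for a measurable $g$ and auxiliary randomness $S$ independent of $(X,A,Y)$. $\phi(X)$ is assumed to have finite second moment in $\mathbb{H}$. *)

(* Defs.v *)
From HB Require Import structures.
From mathcomp Require Import all_boot all_order all_algebra.
From mathcomp Require Import all_classical all_reals all_analysis.
Set Implicit Arguments. Unset Strict Implicit. Unset Printing Implicit Defensive.
Import Order.TTheory GRing.Theory Num.Theory.
Local Open Scope classical_set_scope.
Local Open Scope ring_scope.

Definition inner_product (R : realType) (V : lmodType R) (ip : V -> V -> R) :=
  [/\ (forall u v, ip u v = ip v u),
      (forall (c : R) u v w, ip (c *: u + v) w = c * ip u w + ip v w),
      (forall u, 0 <= ip u u) &
      (forall u, ip u u = 0 -> u = 0)].

(* completeness of V for the norm ||u|| = sqrt (ip u u)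
   (stated with squared norms: ||.||^2 < e for all e > 0) *)
Definition ip_complete (R : realType) (V : lmodType R) (ip : V -> V -> R) :=
  forall u : nat -> V,
    (forall e : R, 0 < e -> exists N : nat, forall m n : nat,
        (N <= m)%N -> (N <= n)%N -> ip (u m - u n) (u m - u n) < e) ->
    exists v : V, forall e : R, 0 < e -> exists N : nat, forall n : nat,
        (N <= n)%N -> ip (u n - v) (u n - v) < e.

(* (V, ip) is a reproducing kernel Hilbert space on the set Xs with feature map
   phi: V is a Hilbert space, and f in V is identified with the function
   x |-> ip f (phi x) (reproducing property); this identification is injective,
   so V is a Hilbert space of functions on Xs with kernel
   k(x, x') = ip (phi x) (phi x'). *)
Definition is_RKHS (R : realType) (V : lmodType R) (Xs : Type)
    (ip : V -> V -> R) (phi : Xs -> V) :=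
  [/\ inner_product ip, ip_complete ip &
      (forall f : V, (forall x, ip f (phi x) = 0) -> f = 0)].

Definition indep_rv d (Om : measurableType d) (R : realType)
    (P : probability Om R) d1 (T1 : measurableType d1)
    d2 (T2 : measurableType d2) (U : Om -> T1) (W : Om -> T2) :=
  forall (B : set T1) (C : set T2), measurable B -> measurable C ->
    P (U @^-1` B `&` W @^-1` C) = (P (U @^-1` B) * P (W @^-1` C))%E.

(* W is (a version of) the conditional expectation E[f | Z]:
   W is sigma(Z)-measurable, integrable, and has the same integral as f
   on every event of sigma(Z) = { Z^-1 C | C measurable }. *)
Definition is_cond_exp d (Om : measurableType d) (R : realType)
    (P : probability Om R) dZ (TZ : measurableType dZ)
    (Z : Om -> TZ) (f W : Om -> R) :=
  [/\ (forall B : set R, measurable B ->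
         exists C : set TZ, measurable C /\ W @^-1` B = Z @^-1` C),
      P.-integrable setT (EFin \o W) &
      (forall C : set TZ, measurable C ->
         (\int[P]_(w in Z @^-1` C) (W w)%:E
          = \int[P]_(w in Z @^-1` C) (f w)%:E)%E)].

(* Main.v *)
Require Import Defs.
From HB Require Import structures.
From mathcomp Require Import all_boot all_order all_algebra.
From mathcomp Require Import all_classical all_reals all_analysis.
From mathcomp Require Import ring lra measurable_realfun.
Import Order.TTheory GRing.Theory Num.Theory.
Local Open Scope classical_set_scope.
Local Open Scope ring_scope.
Import HBSimple HBNNSimple.
Import numFieldNormedType.Exports.

Lemma psd2 (R : realType) (al be ga : R) :
  (forall t s : R, 0 <= al * t^+2 + 2 * be * t * s + ga * s^+2) ->
  [/\ 0 <= al, 0 <= ga & be^+2 <= al * ga].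
Proof.
move=> h.
have ha : 0 <= al by have := h 1 0; lra.
have hg : 0 <= ga by have := h 0 1; lra.
split => //.
have [al0|alp] := eqVneq al 0.
  have [be0|ben] := eqVneq be 0.
    rewrite be0 al0; lra.
  have := h (- (ga + 1) / (2 * be)) 1.
  rewrite al0 mul0r add0r expr1n mulr1.
  have -> : 2 * be * (- (ga + 1) / (2 * be)) = - (ga + 1).
    by field.
  lra.
have := h be (- al).
have alpos : 0 < al by rewrite lt_def alp ha.
move=> H.
have : 0 <= al * (al * ga - be^+2) by move: H; nra.
rewrite pmulr_rge0 //; lra.
Qed.

Lemma key_alg (R : realType) (lam K11 K22 K12 L11 L22 L12 : R) :
  0 <= lam -> 0 <= K11 -> 0 <= K22 -> K12^+2 <= K11 * K22 ->
  0 <= L11 -> 0 <= L22 -> L12^+2 <= L11 * L22 ->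
  0 <= lam^+2 * K11 * L11 + K22 * L22
       + lam * (K11 * K22 + L11 * L22 - (K12 + L12)^+2).
Proof.
move=> l0 k1 k2 k12 l1 l2 l12.
set p := lam^+2 * K11 * L11. set q := K22 * L22. set r := lam * K12 * L12.
have p0 : 0 <= p by rewrite /p; apply: mulr_ge0 => //; apply: mulr_ge0 => //; apply: sqr_ge0.
have q0 : 0 <= q by apply: mulr_ge0.
have rpq : r^+2 <= p * q.
  have -> : r^+2 = lam^+2 * (K12^+2 * L12^+2) by rewrite /r; ring.
  have -> : p * q = lam^+2 * ((K11 * K22) * (L11 * L22)) by rewrite /p /q; ring.
  apply: ler_wpM2l; first exact: sqr_ge0.
  apply: ler_pM => //; exact: sqr_ge0.
have h2r : 2 * r <= p + q.
  have [r0|r0] := leP r 0; first lra.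
  have : (2 * r)^+2 <= (p + q)^+2.
    have -> : (2 * r)^+2 = 4 * r^+2 by ring.
    have -> : (p + q)^+2 = 4 * (p * q) + (p - q)^+2 by ring.
    have := sqr_ge0 (p - q); lra.
  rewrite -ler_sqrt ?sqrtr_sqr; last by nra.
  rewrite !ger0_norm; lra.
have e : lam * (K11 * K22 + L11 * L22 - (K12 + L12)^+2)
   = lam * (K11 * K22 - K12^+2) + lam * (L11 * L22 - L12^+2) - 2 * r.
  rewrite /r; ring.
rewrite e.
have : 0 <= lam * (K11 * K22 - K12^+2) by apply: mulr_ge0; lra.
have : 0 <= lam * (L11 * L22 - L12^+2) by apply: mulr_ge0; lra.
lra.
Qed.

Lemma final_alg (R : realType) (lam vA vY c kW kU kc : R) :
  0 <= lam -> 0 < vA -> 0 < vY -> 0 <= kW -> 0 <= kU -> kc^+2 <= kW * kU ->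
  0 <= vA - kW -> 0 <= vY - kU -> (c - kc)^+2 <= (vA - kW) * (vY - kU) ->
  2^-1 * (lam * vA - vY
      - Num.sqrt (vY ^+ 2 + lam ^+ 2 * vA ^+ 2
                  - 2 * lam * vA * vY * (2 * (c / Num.sqrt (vY * vA)) ^+ 2 - 1)))
  <= lam * kW - kU.
Proof.
move=> l0 vA0 vY0 k1 k2 k12 l1 l2 l12.
have m0 : 0 < vY * vA by apply: mulr_gt0.
have -> : (c / Num.sqrt (vY * vA)) ^+ 2 = c^+2 / (vY * vA).
  by rewrite expr_div_n sqr_sqrtr // ltW.
set D := (X in Num.sqrt X).
have eD : D = (lam * vA - vY)^+2 + 4 * lam * (vA * vY - c^+2).
  by rewrite /D; field; rewrite !gt_eqF.
have hE := @key_alg R lam kW kU kc (vA - kW) (vY - kU) (c - kc) l0 k1 k2 k12 l1 l2 l12.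
set x := lam * kW - kU. set tr := lam * vA - vY.
have eq2 : D - (tr - 2 * x)^+2 = 4 * (lam ^+ 2 * kW * (vA - kW) + kU * (vY - kU) +
       lam * (kW * kU + (vA - kW) * (vY - kU) - (kc + (c - kc)) ^+ 2)).
  rewrite eD /tr /x; ring.
have hle : tr - 2 * x <= Num.sqrt D.
  apply: (le_trans (ler_norm _)).
  rewrite -sqrtr_sqr; apply: ler_wsqrtr; lra.
lra.
Qed.


Lemma Lfun2_of d (T : measurableType d) (R : realType)
  (mu : {measure set T -> \bar R}) (f : T -> R) :
  measurable_fun setT f -> (\int[mu]_x ((f x)^+2)%:E < +oo)%E ->
  f \in Lfun mu 2%:E.
Proof.
move=> mf fin; rewrite inE; apply/andP; split; first by rewrite inE.
rewrite inE /= /finite_norm unlock /Lnorm.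
apply: poweR_lty.

rewrite (eq_integral (fun x => ((f x)^+2)%:E)); first exact: fin.
move=> x _; change ((`|(f x)%:E| `^ 2)%E = (f x ^+ 2)%:E).
rewrite abse_EFin poweR_EFin; congr EFin.
rewrite powR_mulrn ?normr_ge0 // real_normK // num_real.
by []. Qed.


Section core.
Context d (Om : measurableType d) (R : realType) (P : probability Om R).
Context dZ (Zs : measurableType dZ) (Z : Om -> Zs).
Hypothesis mZ : measurable_fun setT Z.

Local Notation G := (g_sigma_algebra_preimageType Z).

Lemma G_measurable (A : set G) : measurable A -> measurable (A : set Om).
Proof. by case=> B mB <-; exact: mZ. Qed.

Lemma G_mfun (f : G -> R) : measurable_fun setT f ->
  measurable_fun (setT : set Om) (f : Om -> R).
Proof. move=> mf _ B mB; exact: G_measurable (mf measurableT B mB). Qed.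

Lemma int_indic_pt (f : Om -> R) (A : set Om) (k : R) w :
  (f w * (k * \1_A w))%:E = (k%:E * ((EFin \o f) \_ A) w)%E.
Proof.
rewrite patchE indicE; case: (boolP (w \in A)) => _ /=.
  by rewrite -EFinM mulr1 mulrC.
by rewrite mulr0 mulr0 mule0.
Qed.

Lemma int_indic_int (f : Om -> R) (A : set Om) (k : R) : measurable A ->
  P.-integrable setT (EFin \o f) ->
  P.-integrable setT (fun w => (f w * (k * \1_A w))%:E).
Proof.
move=> mA fi.
apply: (eq_integrable _ (fun w => (k%:E * ((EFin \o f) \_ A) w)%E)) => //.
  by move=> w _; rewrite int_indic_pt.
apply: integrableZl => //; apply/(integrable_mkcond _ mA).
exact: (integrableS measurableT mA (@subsetT _ _) fi).
Qed.

Lemma int_indic (f : Om -> R) (A : set Om) (k : R) : measurable A ->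
  P.-integrable setT (EFin \o f) ->
  (\int[P]_w (f w * (k * \1_A w))%:E = k%:E * \int[P]_(w in A) (f w)%:E)%E.
Proof.
move=> mA fi.
have iA : P.-integrable A (EFin \o f) := integrableS measurableT mA (@subsetT _ _) fi.
rewrite -integralZl// [RHS]integral_mkcond.
apply: eq_integral => w _; rewrite patchE indicE; case: (boolP (w \in A)) => _ /=.
  by rewrite -EFinM mulr1 mulrC.
by rewrite !mulr0.
Qed.

Lemma intMl (f h : Om -> R) : P.-integrable setT (EFin \o f) ->
  measurable_fun setT h -> [bounded h x | x in setT] ->
  P.-integrable setT (fun w => (f w * h w)%:E).
Proof.
move=> fi mh bh.
have := integrableMl measurableT fi mh bh.
by apply: eq_integrable => // w _; rewrite /= EFinM.
Qed.

Variables (V F : Om -> R).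
Hypothesis hVF : forall C, measurable C ->
  (\int[P]_(w in Z @^-1` C) (V w)%:E = \int[P]_(w in Z @^-1` C) (F w)%:E)%E.
Hypothesis iV : P.-integrable setT (EFin \o V).
Hypothesis iF : P.-integrable setT (EFin \o F).

Lemma testfun (f : {sfun G >-> R}) :
  (\int[P]_w (V w * (f : G -> R) w)%:E = \int[P]_w (F w * (f : G -> R) w)%:E)%E.
Proof.
have mA y : measurable (f @^-1` [set y] : set Om).
  apply: G_measurable; exact: measurable_sfunP.
have key (h : Om -> R) : P.-integrable setT (EFin \o h) ->
    (\int[P]_w (h w * (f : G -> R) w)%:E = \sum_(y <- finmap.enum_fset (fset_set (range f)))
        y%:E * \int[P]_(w in (f @^-1` [set y] : set Om)) (h w)%:E)%E.
  move=> hi.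
  have pt w : (h w * (f : G -> R) w)%:E = \sum_(y <- finmap.enum_fset (fset_set (range f)))
      (h w * (y * \1_(f @^-1` [set y] : set Om) w))%:E.
    rewrite sumEFin; congr EFin.
    rewrite {1}(fimfunE f w) fsbig_finite /=; last first. exact: (@fimfunP _ _ f).
    by rewrite big_distrr.
  under eq_integral => w _ do rewrite pt.
  rewrite integral_sum//; last by move=> y; exact: int_indic_int.
  by apply: eq_bigr => y _; exact: int_indic.
rewrite !key//; apply: eq_bigr => y _; congr (_ * _)%E.
have := measurable_sfunP f (measurable_set1 y).
case=> B mB eB; rewrite -eB setTI; exact: hVF.
Qed.


Lemma limn_einf_le_cst (u : (\bar R)^nat) (M : \bar R) :
  (forall n, (u n <= M)%E) -> (limn_einf u <= M)%E.
Proof.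
move=> uM; rewrite limn_einf_lim; apply: lime_le; first exact: is_cvg_einfs.
apply: nearW => n; apply: le_trans (uM n); apply: ereal_inf_lbound.
by exists n => //=.
Qed.

Hypothesis mV : measurable_fun (setT : set G) V.
Hypothesis F2 : F \in Lfun P 2%:E.

Let Vp : Om -> R := fun w => Num.max (V w) 0.
Let Vn : Om -> R := fun w => Num.max (- V w) 0.
Let mVp : measurable_fun (T := G) (U := measurable_realfun.constructive_ereal_extended__canonical__measurable_structure_SigmaRing R) setT (fun w => (Vp w)%:E).
Proof. apply/measurable_EFinP; apply: measurable_maxr => //. Qed.
Let mVn : measurable_fun (T := G) (U := measurable_realfun.constructive_ereal_extended__canonical__measurable_structure_SigmaRing R) setT (fun w => (Vn w)%:E).
Proof. apply/measurable_EFinP; apply: measurable_maxr => //; exact: measurableT_comp. Qed.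
Let a := nnsfun_approx (measurableT : measurable (setT : set G)) mVp.
Let b := nnsfun_approx (measurableT : measurable (setT : set G)) mVn.

Let a_ge0 n w : 0 <= a n w. Proof. exact: fun_ge0. Qed.
Let b_ge0 n w : 0 <= b n w. Proof. exact: fun_ge0. Qed.
Let a_le n w : a n w <= Vp w.
Proof.
rewrite -lee_fin /a nnsfun_approxE; apply: le_approx => // x _.
by rewrite lee_fin le_max lexx orbT.
Qed.
Let b_le n w : b n w <= Vn w.
Proof.
rewrite -lee_fin /b nnsfun_approxE; apply: le_approx => // x _.
by rewrite lee_fin le_max lexx orbT.
Qed.

Let s n (w : Om) : R := a n w - b n w.

Lemma s_sq_le n w : (s n w)^+2 <= V w * s n w.
Proof.
have := a_ge0 n w; have := b_ge0 n w; have := a_le n w; have := b_le n w.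
rewrite /s /Vp /Vn; have [v0|v0] := leP 0 (V w).
  rewrite (max_idPr _); last by rewrite oppr_le0.
  nra.
rewrite (max_idPl _); last by rewrite oppr_ge0 ltW.
nra.
Qed.


Let ma k : measurable_fun (setT : set Om) (a k : Om -> R).
Proof. apply: G_mfun; exact: measurable_funP. Qed.
Let mb k : measurable_fun (setT : set Om) (b k : Om -> R).
Proof. apply: G_mfun; exact: measurable_funP. Qed.

Lemma step_le n :
  (\int[P]_w ((s n w)^+2)%:E <= \int[P]_w ((F w)^+2)%:E)%E.
Proof.
have iF2 : P.-integrable setT (fun w => ((F w)^+2)%:E) :=
  Lfun2_integrable_sqr F2.
have iVa := intMl _ _ iV (ma n) (simple_bounded (a n)).
have iVb := intMl _ _ iV (mb n) (simple_bounded (b n)).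
have iFa := intMl _ _ iF (ma n) (simple_bounded (a n)).
have iFb := intMl _ _ iF (mb n) (simple_bounded (b n)).
have eVs w : (V w * s n w)%:E = ((V w * a n w)%:E - (V w * b n w)%:E)%E.
  by rewrite /s mulrBr EFinB.
have eFs w : (F w * s n w)%:E = ((F w * a n w)%:E - (F w * b n w)%:E)%E.
  by rewrite /s mulrBr EFinB.
have iVs : P.-integrable setT (fun w => (V w * s n w)%:E).
  have := integrableB measurableT iVa iVb.
  by apply: eq_integrable => // w _; rewrite eVs.
have iFs : P.-integrable setT (fun w => (F w * s n w)%:E).
  have := integrableB measurableT iFa iFb.
  by apply: eq_integrable => // w _; rewrite eFs.
have ms : measurable_fun setT (s n) := measurable_funB (ma n) (mb n).
have is2 : P.-integrable setT (fun w => ((s n w)^+2)%:E).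
  apply: (le_integrable measurableT _ _ iVs).
    by apply/measurable_EFinP; exact: measurable_funX.
  move=> w _; rewrite !abse_EFin lee_fin.
  have h1 := s_sq_le n w; have h2 := sqr_ge0 (s n w).
  by rewrite !ger0_norm //; exact: le_trans h1.
have e1 : (\int[P]_w (V w * s n w)%:E = \int[P]_w (F w * s n w)%:E)%E.
  under eq_integral => w _ do rewrite eVs.
  rewrite integralB //.
  under [RHS]eq_integral => w _ do rewrite eFs.
  rewrite integralB //.
  by rewrite (testfun (a n)) (testfun (b n)).
have le1 : (\int[P]_w ((s n w)^+2)%:E <= \int[P]_w (V w * s n w)%:E)%E.
  apply: le_integral => // w _; rewrite lee_fin; exact: s_sq_le.
have i2Fs : P.-integrable setT (fun w => (2%:E * (F w * s n w)%:E)%E).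
  exact: integrableZl.
have iFs2 : P.-integrable setT (fun w => ((F w ^+ 2)%:E + ((s n w)^+2)%:E)%E).
  exact: integrableD.
have le2 : (\int[P]_w (2%:E * (F w * s n w)%:E)%E <=
    \int[P]_w ((F w ^+ 2)%:E + ((s n w)^+2)%:E)%E)%E.
  apply: le_integral => // w _; rewrite -EFinM -EFinD lee_fin.
  have := sqr_ge0 (F w - s n w); nra.
rewrite integralZl // integralD // in le2.
move: le1 le2; rewrite e1.
have f1 := integrable_fin_num measurableT is2.
have f2 := integrable_fin_num measurableT iFs.
have f3 := integrable_fin_num measurableT iF2.
move: f1 f2 f3.
set x1 := (\int[P]_w ((s n w)^+2)%:E)%E.
set x2 := (\int[P]_w (F w * s n w)%:E)%E.
set x3 := (\int[P]_w ((F w)^+2)%:E)%E.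
move=> f1 f2 f3.
rewrite -(fineK f1) -(fineK f2) -(fineK f3) -EFinM -EFinD !lee_fin.
lra.
Qed.


Lemma core_L2 :
  (\int[P]_w ((V w)^+2)%:E <= \int[P]_w ((F w)^+2)%:E)%E.
Proof.
have cvs w : (fun n => ((s n w)^+2)%:E) @ \oo --> ((V w)^+2)%:E.
  have ca : ((fun n (x : Om) => a n x : R)^~ w) @ \oo --> Vp w.
    have h0 : forall x, (setT : set G) x -> ((Vp x)%:E >= 0)%E.
      by move=> x _; rewrite lee_fin le_max lexx orbT.
    have := cvg_nnsfun_approx (measurableT : measurable (setT : set G)) mVp h0 (I : (setT : set G) w).
    by move/fine_cvg.
  have cb : ((fun n (x : Om) => b n x : R)^~ w) @ \oo --> Vn w.
    have h0 : forall x, (setT : set G) x -> ((Vn x)%:E >= 0)%E.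
      by move=> x _; rewrite lee_fin le_max lexx orbT.
    have := cvg_nnsfun_approx (measurableT : measurable (setT : set G)) mVn h0 (I : (setT : set G) w).
    by move/fine_cvg.
  have eV : V w = Vp w - Vn w.
    rewrite /Vp /Vn; have [v0|v0] := leP 0 (V w).
      by rewrite (max_idPr _) ?subr0 // oppr_le0.
    by rewrite (max_idPl _) ?sub0r ?opprK // oppr_ge0 ltW.
  have h : (((fun n => a n w) - (fun n => b n w)) \* ((fun n => a n w) - (fun n => b n w))) @ \oo --> ((Vp w - Vn w) * (Vp w - Vn w)).
    by apply: cvgM; apply: cvgB.
  apply: cvg_EFin; first exact: nearW.
  rewrite eV expr2.
  have e : (fine \o (fun n => (s n w ^+ 2)%:E)) =1
     (((fun n => a n w) - (fun n => b n w)) \* ((fun n => a n w) - (fun n => b n w))).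
    by move=> n; rewrite /= /s expr2.
  by rewrite (eq_cvg _ _ e).
have mf n : measurable_fun setT (fun w => ((s n w)^+2)%:E).
  by apply/measurable_EFinP; apply: measurable_funX; exact: measurable_funB.
have := fatou P measurableT mf (fun n w _ => sqr_ge0 _).
under eq_integral => w _ do rewrite ((cvg_limn_einf_sup (cvs w)).1).
move=> /le_trans; apply.
apply: limn_einf_le_cst => n; exact: step_le.
Qed.

Lemma core_Lfun : V \in Lfun P 2%:E.
Proof.
apply: Lfun2_of; first exact: G_mfun.
apply: le_lt_trans core_L2 _.
have := Lfun2_integrable_sqr F2.
move/integrableP => [_]; apply: le_lt_trans.
apply: ge0_le_integral => //.
- by move=> w _; rewrite lee_fin sqr_ge0.
- apply/measurable_EFinP; apply: measurable_funX.
  by have := F2; rewrite inE => /andP[]; rewrite inE.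
- apply/measurableT_comp => //; apply/measurable_EFinP; apply: measurable_funX.
  by have := F2; rewrite inE => /andP[]; rewrite inE.
- move=> w _; change ((F w ^+ 2)%:E <= `|(F w ^+ 2)%:E|)%E.
  by rewrite abse_EFin lee_fin ger0_norm // sqr_ge0.
Qed.

End core.

Lemma cond_var d (Om : measurableType d) (R : realType) (P : probability Om R)
  dZ (Zs : measurableType dZ) (Z : Om -> Zs) (mZ : measurable_fun setT Z)
  (V F : Om -> R) :
  (forall C, measurable C -> \int[P]_(w in Z @^-1` C) (V w)%:E
                          = \int[P]_(w in Z @^-1` C) (F w)%:E)%E ->
  P.-integrable setT (EFin \o V) ->
  measurable_fun (setT : set (g_sigma_algebra_preimageType Z)) V ->
  F \in Lfun P 2%:E ->
  V \in Lfun P 2%:E /\ ('V_P[V] <= 'V_P[F])%E.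
Proof.
move=> hVF iV mV F2.
have Pfin : P setT \is a fin_num := fin_num_measure P _ measurableT.
have iF : P.-integrable setT (EFin \o F).
  have F1 : F \in Lfun P 1 := Lfun_subset12 Pfin F2.
  exact/Lfun1_integrable.
have VL2 := @core_Lfun _ _ _ P _ _ Z mZ V F hVF iV iF mV F2.
split => //.
rewrite !varianceE //.
have eE : ('E_P[V] = 'E_P[F])%E.
  by rewrite unlock; have := hVF setT measurableT; rewrite preimage_setT.
rewrite eE; apply: leeB => //.
have := @core_L2 _ _ _ P _ _ Z mZ V F hVF iV iF mV F2.
by rewrite unlock.
Qed.

Section ip_lemmas.
Context (R : realType) (H : lmodType R) (ip : H -> H -> R).
Hypothesis hip : inner_product ip.

Lemma ipDl u v w : ip (u + v) w = ip u w + ip v w.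
Proof. by case: hip => _ hl _ _; have := hl 1 u v w; rewrite scale1r mul1r. Qed.

Lemma ip0l w : ip 0 w = 0.
Proof. by have := ipDl 0 0 w; rewrite addr0 => h; lra. Qed.

Lemma ipZl c u w : ip (c *: u) w = c * ip u w.
Proof. by case: hip => _ hl _ _; have := hl c u 0 w; rewrite addr0 ip0l addr0. Qed.

Lemma ip_cs u v : (ip u v)^+2 <= ip u u * ip v v.
Proof.
case: hip => hs _ hpos _.
have := @psd2 R (ip u u) (ip u v) (ip v v).
case.
  move=> t s'; have := hpos (t *: u + s' *: v).
  rewrite ipDl !ipZl [ip u _]hs [ip v _]hs !ipDl !ipZl (hs v u).
  move=> h; nra.
by [].
Qed.

End ip_lemmas.

Lemma var_lin d (T : measurableType d) (R : realType) (P : probability T R)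
  (X1 X2 : T -> R) (t s : R) :
  X1 \in Lfun P 2%:E -> X2 \in Lfun P 2%:E ->
  'V_P[(t \o* X1 \+ s \o* X2)%R] = ((t^+2)%:E * 'V_P[X1] + (s^+2)%:E * 'V_P[X2]
     + (2 * t * s)%:E * covariance P X1 X2)%E.
Proof.
move=> h1 h2.
have Pfin : P setT \is a fin_num := fin_num_measure P _ measurableT.
have r1 : (1 <= 2 :> R)%R by lra.
have h1' := Lfun_scale t r1 h1.
have h2' := Lfun_scale s r1 h2.
have l1 := Lfun_subset12 Pfin h1.
have l2 := Lfun_subset12 Pfin h2.
have l2' := Lfun_subset12 Pfin h2'.
rewrite varianceD // varianceZ // varianceZ //.
rewrite covarianceZl //; last exact: Lfun2_mul_Lfun1.
rewrite covarianceZr //; last exact: Lfun2_mul_Lfun1.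
by rewrite muleA -EFinM muleA -EFinM.
Qed.

Lemma int_lin d (T : measurableType d) (R : realType) (mu : {measure set T -> \bar R})
  (D : set T) (mD : measurable D) (f1 f2 : T -> R) (t s : R) :
  mu.-integrable D (EFin \o f1) -> mu.-integrable D (EFin \o f2) ->
  (\int[mu]_(w in D) ((t \o* f1 \+ s \o* f2)%R w)%:E =
   t%:E * \int[mu]_(w in D) (EFin \o f1) w + s%:E * \int[mu]_(w in D) (EFin \o f2) w)%E.
Proof.
move=> i1 i2.
rewrite -(integralZl mD i1) -(integralZl mD i2) -integralD //; last 2 first.
- exact: integrableZl.
- exact: integrableZl.
apply: eq_integral => w _.
change ((f1 w * t + f2 w * s)%:E = (t%:E * (f1 w)%:E + s%:E * (f2 w)%:E)%E).
by rewrite EFinD !EFinM (muleC (f1 w)%:E) (muleC (f2 w)%:E).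
Qed.

Lemma int_lin_int d (T : measurableType d) (R : realType) (mu : {measure set T -> \bar R})
  (D : set T) (mD : measurable D) (f1 f2 : T -> R) (t s : R) :
  mu.-integrable D (EFin \o f1) -> mu.-integrable D (EFin \o f2) ->
  mu.-integrable D (EFin \o (t \o* f1 \+ s \o* f2)%R).
Proof.
move=> i1 i2.
have := integrableD mD (integrableZl mD t i1) (integrableZl mD s i2).
apply: eq_integrable => // w _.
change ((t%:E * (f1 w)%:E + s%:E * (f2 w)%:E)%E = (f1 w * t + f2 w * s)%:E).
by rewrite EFinD !EFinM (muleC (f1 w)%:E) (muleC (f2 w)%:E).
Qed.

Theorem theorem6 (R : realType) (dO : measure_display) (Om : measurableType dO)
  (P : probability Om R) (dX : measure_display) (Xs : measurableType dX)
  (H : lmodType R) (ip : H -> H -> R) (phi : Xs -> H)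
  (X : Om -> Xs) (y a : H) (lam : R) :
  is_RKHS ip phi ->
  (forall h : H, measurable_fun setT (fun x => ip (phi x) h)) ->
  measurable_fun setT (fun x => ip (phi x) (phi x)) ->
  measurable_fun setT X ->
  (\int[P]_w (ip (phi (X w)) (phi (X w)))%:E < +oo)%E ->
  y != 0 -> a != 0 ->
  let Y := fun w => ip (phi (X w)) y in
  let A := fun w => ip (phi (X w)) a in
  (0 < 'V_P[Y])%E -> (0 < 'V_P[A])%E ->
  0 <= lam ->
  let vY := fine 'V_P[Y] in
  let vA := fine 'V_P[A] in
  let rhoYA := fine (covariance P Y A) / Num.sqrt (vY * vA) in
  forall (dZ dS : measure_display) (Zs : measurableType dZ)
    (Ss : measurableType dS) (S : Om -> Ss) (g : Xs * Ss -> Zs),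
  measurable_fun setT S -> measurable_fun setT g ->
  indep_rv P (fun w => (X w, A w, Y w)) S ->
  let Z := fun w => g (X w, S w) in
  forall EA EY : Om -> R,
  is_cond_exp P Z A EA -> is_cond_exp P Z Y EY ->
  ((2^-1 * (lam * vA - vY
      - Num.sqrt (vY ^+ 2 + lam ^+ 2 * vA ^+ 2
                  - 2 * lam * vA * vY * (2 * rhoYA ^+ 2 - 1))))%:E
   <= lam%:E * 'V_P[EA] - 'V_P[EY])%E.
Proof.
move=> hR mip mpp mX fin2 y0 a0 Y A VY0 VA0 lam0 vY vA rhoYA dZ dS Zs Ss S g mS mg _ Z EA EY cA cY.
case: hR => hip _ _.
have mZ : measurable_fun setT Z := measurableT_comp mg (measurable_fun_pair mX mS).
have Pfin : P setT \is a fin_num := fin_num_measure P _ measurableT.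
have ipp0 u : 0 <= ip u u by case: hip => _ _ hpos _; exact: hpos.
have L2h (h : H) : (fun w => ip (phi (X w)) h) \in Lfun P 2%:E.
  have mh : measurable_fun setT (fun w => ip (phi (X w)) h) := measurableT_comp (mip h) mX.
  apply: Lfun2_of => //.
  have mpX : measurable_fun setT (fun w => ip (phi (X w)) (phi (X w))) :=
    measurableT_comp mpp mX.
  apply: (@le_lt_trans _ _ (\int[P]_w ((ip h h)%:E * (ip (phi (X w)) (phi (X w)))%:E))%E).
    apply: ge0_le_integral => //.
    - by move=> w _; rewrite lee_fin sqr_ge0.
    - by apply/measurable_EFinP; apply: measurable_funX.
    - by apply: emeasurable_funM => //; apply/measurable_EFinP.
    - move=> w _; rewrite -EFinM lee_fin mulrC; exact: ip_cs.
  rewrite ge0_integralZl //.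
  - by rewrite lte_mul_pinfty ?lee_fin.
  - by apply/measurable_EFinP.
  - by move=> w _; rewrite lee_fin.
  - by rewrite lee_fin.
have YL2 : Y \in Lfun P 2%:E := L2h y.
have AL2 : A \in Lfun P 2%:E := L2h a.
have L21 (W : Om -> R) : W \in Lfun P 2%:E -> P.-integrable setT (EFin \o W).
  by move=> W2; have W1 : W \in Lfun P 1 := Lfun_subset12 Pfin W2; exact/Lfun1_integrable.
have iA := L21 A AL2.
have iY := L21 Y YL2.
case: cA => mEA iEA hEA.
case: cY => mEY iEY hEY.
have Gm (W : Om -> R) : (forall B : set R, measurable B ->
    exists C : set Zs, measurable C /\ W @^-1` B = Z @^-1` C) ->
    measurable_fun (setT : set (g_sigma_algebra_preimageType Z)) W.
  move=> hW _ B mB; have [C [mC e]] := hW B mB; exists C => //; by rewrite e.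
have mEA' := Gm EA mEA.
have mEY' := Gm EY mEY.
have [EAL2 _] := @cond_var _ _ _ P _ _ Z mZ EA A hEA iEA mEA' AL2.
have [EYL2 _] := @cond_var _ _ _ P _ _ Z mZ EY Y hEY iEY mEY' YL2.
have key t s : ((t \o* EA \+ s \o* EY)%R \in Lfun P 2%:E) /\
    ('V_P[(t \o* EA \+ s \o* EY)%R] <= 'V_P[(t \o* A \+ s \o* Y)%R])%E.
  apply: (@cond_var _ _ _ P _ _ Z mZ).
  - move=> C mC.
    have mZC : measurable (Z @^-1` C) by rewrite -[Z @^-1` C]setTI; exact: mZ.
    have sub := @subsetT _ (Z @^-1` C).
    rewrite !int_lin //.
    + by rewrite hEA // hEY.
    + exact: (integrableS measurableT mZC sub iA).
    + exact: (integrableS measurableT mZC sub iY).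
    + exact: (integrableS measurableT mZC sub iEA).
    + exact: (integrableS measurableT mZC sub iEY).
  - exact: int_lin_int.
  - apply: measurable_funD.
      exact: (measurable_funM mEA' (measurable_cst t)).
    exact: (measurable_funM mEY' (measurable_cst s)).
  - have r1 : (1 <= 2 :> R)%R by lra.
    rewrite -fctD; apply: rpredD; [exact: (Lfun_scale t r1 AL2)|exact: (Lfun_scale s r1 YL2)].
have EAL1 : EA \in Lfun P 1 := Lfun_subset12 Pfin EAL2.
have EYL1 : EY \in Lfun P 1 := Lfun_subset12 Pfin EYL2.
have AL1 : A \in Lfun P 1 := Lfun_subset12 Pfin AL2.
have YL1 : Y \in Lfun P 1 := Lfun_subset12 Pfin YL2.
set kW := fine 'V_P[EA].
set kU := fine 'V_P[EY].
set kc := fine (covariance P EA EY).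
set c := fine (covariance P A Y).
have eVEA : 'V_P[EA] = kW%:E by rewrite fineK // variance_fin_num.
have eVEY : 'V_P[EY] = kU%:E by rewrite fineK // variance_fin_num.
have eVA : 'V_P[A] = vA%:E by rewrite fineK // variance_fin_num.
have eVY : 'V_P[Y] = vY%:E by rewrite fineK // variance_fin_num.
have ec1 : covariance P EA EY = kc%:E.
  by rewrite fineK // covariance_fin_num //; exact: Lfun2_mul_Lfun1.
have ec2 : covariance P A Y = c%:E.
  by rewrite fineK // covariance_fin_num //; exact: Lfun2_mul_Lfun1.
have quad t s : t^+2 * kW + s^+2 * kU + 2 * t * s * kc <=
                t^+2 * vA + s^+2 * vY + 2 * t * s * c.
  have := (key t s).2.
  by rewrite !var_lin // eVEA eVEY ec1 eVA eVY ec2 -!EFinM -!EFinD lee_fin.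
have nneg t s : 0 <= t^+2 * kW + s^+2 * kU + 2 * t * s * kc.
  have := @variance_ge0 _ _ _ P (t \o* EA \+ s \o* EY)%R.
  by rewrite !var_lin // eVEA eVEY ec1 -!EFinM -!EFinD lee_fin.
have [k1 k2 k12] : [/\ 0 <= kW, 0 <= kU & kc^+2 <= kW * kU].
  apply: psd2 => t s; have := nneg t s.
  have -> : kW * t ^+ 2 + 2 * kc * t * s + kU * s ^+ 2 =
    t^+2 * kW + s^+2 * kU + 2 * t * s * kc by ring.
  by [].
have [l1 l2 l12] : [/\ 0 <= vA - kW, 0 <= vY - kU & (c - kc)^+2 <= (vA - kW) * (vY - kU)].
  apply: psd2 => t s; have := quad t s.
  have -> : (vA - kW) * t ^+ 2 + 2 * (c - kc) * t * s + (vY - kU) * s ^+ 2 =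
    (t^+2 * vA + s^+2 * vY + 2 * t * s * c) - (t^+2 * kW + s^+2 * kU + 2 * t * s * kc) by ring.
  by rewrite subr_ge0.
have vA0 : 0 < vA by move: VA0; rewrite eVA lte_fin.
have vY0 : 0 < vY by move: VY0; rewrite eVY lte_fin.
rewrite eVEA eVEY -EFinM -EFinB lee_fin /rhoYA covarianceC -/c.
exact: (@final_alg R lam vA vY c kW kU kc lam0 vA0 vY0 k1 k2 k12 l1 l2 l12).
Qed.
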